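(* Let $\beta>0$, $t>0$ and let $\gamma$ be a path in the time interval $[0,t]$ with at most $\beta t$ jumps. Then there are at least $\frac{\sqrt t}{4}-1$ disjoint time intervals contained in $[0,\frac t2]$ that are favorable for $\gamma$.
   Context: A path in the time interval $[0,t]$ is a finite sequence of space-time points in $\mathbb{Z}\times[0,t]$ with nondecreasing times, whose consecutive segments are either vertical (same site) or horizontal jumps between neighbouring sites at a fixed time; its jumps are these horizontal segments. A time interval $[s-\sqrt t,s)\subseteq[0,t]$ is favorable for $\gamma$ if for every $u\in[s-\sqrt t,s)$ the number of jumps of $\gamma$ during $[u,s)$ is at most $4\beta|s-u|$. *)

(* Defs.v *)
From Stdlib Require Import Reals Lra ZArith List.
Open Scope R_scope.

(* A space-time point (x, s) : Z * R.  A path is a finite list of points. *)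
Definition stpoint := (Z * R)%type.

Definition good_segment (a b : stpoint) : Prop :=
  snd a <= snd b /\
  (fst a = fst b \/ (Z.abs (fst a - fst b) = 1%Z /\ snd a = snd b)).

Fixpoint consecutive_ok (p : list stpoint) : Prop :=
  match p with
  | a :: ((b :: _) as q) => good_segment a b /\ consecutive_ok q
  | _ => True
  end.

Definition is_path (t : R) (p : list stpoint) : Prop :=
  (forall a, In a p -> 0 <= snd a <= t) /\ consecutive_ok p.

Fixpoint jump_times (p : list stpoint) : list R :=
  match p with
  | a :: ((b :: _) as q) =>
      if Z.eqb (fst a) (fst b) then jump_times q else snd a :: jump_times q
  | _ => nil
  end.

Definition num_jumps (p : list stpoint) : nat := length (jump_times p).

Definition in_Ico (u s r : R) : bool :=
  if Rle_dec u r then (if Rlt_dec r s then true else false) else false.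

Definition num_jumps_in (p : list stpoint) (u s : R) : nat :=
  length (filter (in_Ico u s) (jump_times p)).

Definition interval_of (t s : R) (u : R) : Prop := s - sqrt t <= u < s.

Definition favorable (beta t : R) (p : list stpoint) (s : R) : Prop :=
  0 <= s - sqrt t /\ s <= t /\
  forall u, s - sqrt t <= u < s ->
    INR (num_jumps_in p u s) <= 4 * beta * Rabs (s - u).

(* Main.v *)
Require Import Defs.
From Stdlib Require Import Reals List.
From Stdlib Require Import ZArith Arith Lra Lia Psatz Wf_nat ClassicalEpsilon.
Open Scope R_scope.

Definition cnt (J : list R) (x : R) : nat :=
  length (filter (fun r => if Rlt_dec r x then true else false) J).
Definition phi (b : R) (J : list R) (x : R) : R := 4*b*x - INR (cnt J x).

Lemma cnt_le_len J x : (cnt J x <= length J)%nat.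
Proof. unfold cnt; induction J as [|a J IH]; simpl; [lia|]; destruct Rlt_dec; simpl; lia. Qed.

Lemma cnt_mono J u s : u <= s -> (cnt J u <= cnt J s)%nat.
Proof.
  intro H; unfold cnt; induction J as [|a J IH]; simpl; [lia|].
  destruct (Rlt_dec a u), (Rlt_dec a s); simpl; try lia; exfalso; lra.
Qed.

Lemma cnt_split J u s : u <= s ->
  (length (filter (in_Ico u s) J) + cnt J u = cnt J s)%nat.
Proof.
  intro H; unfold cnt; induction J as [|a J IH]; simpl; [lia|].
  unfold in_Ico at 1.
  destruct (Rle_dec u a), (Rlt_dec a s), (Rlt_dec a u); simpl; try lia; exfalso; lra.
Qed.

Lemma phi_lip b J u s : u <= s -> phi b J s - phi b J u <= 4*b*(s-u).
Proof.
  intro H; unfold phi. apply (cnt_mono J) in H. apply le_INR in H. lra.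
Qed.

Lemma first_pass b J c : 0 < b ->
  exists s, c <= phi b J s /\ forall u, u < s -> phi b J u < c.
Proof.
  intro Hb.
  set (P := fun k => (cnt J ((c + INR k)/(4*b)) <= k)%nat).
  destruct (dec_inh_nat_subset_has_unique_least_element P) as [k [[Pk Hmin] _]].
  - intro n; unfold P; destruct (le_lt_dec (cnt J ((c + INR n)/(4*b))) n); [left|right]; lia.
  - exists (length J); apply cnt_le_len.
  - exists ((c+INR k)/(4*b)). split.
    + unfold phi. replace (4*b*((c+INR k)/(4*b))) with (c + INR k) by (field; lra).
      unfold P in Pk. apply le_INR in Pk. lra.
    + intros u Hu. destruct (Rlt_or_le (phi b J u) c) as [h|h]; auto. exfalso.
      set (m := cnt J u) in *.
      assert (Hm : (c + INR m)/(4*b) <= u).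
      { apply Rmult_le_reg_r with (4*b); [lra|]. unfold Rdiv.
        rewrite Rmult_assoc, Rinv_l by lra. unfold phi in h. fold m in h. lra. }
      assert (Pm : P m) by (unfold P; apply cnt_mono; exact Hm).
      apply Hmin in Pm. apply le_INR in Pm.
      assert ((c + INR k)/(4*b) <= (c + INR m)/(4*b)).
      { unfold Rdiv; apply Rmult_le_compat_r. left; apply Rinv_0_lt_compat; lra. lra. }
      lra.
Qed.

Definition pt b J c (Hb : 0 < b) : R :=
  proj1_sig (constructive_indefinite_description _ (first_pass b J c Hb)).

Lemma pt_spec b J c Hb : c <= phi b J (pt b J c Hb) /\
  forall u, u < pt b J c Hb -> phi b J u < c.
Proof. unfold pt. destruct constructive_indefinite_description; simpl; auto. Qed.

Lemma good_point beta t gamma s c :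
  0 < beta -> 0 < t ->
  INR (num_jumps gamma) <= beta * t ->
  4 * beta * sqrt t <= c <= beta * t ->
  c <= phi beta (jump_times gamma) s ->
  (forall u, u < s -> phi beta (jump_times gamma) u < c) ->
  (forall u, interval_of t s u -> 0 <= u <= t / 2) /\ favorable beta t gamma s.
Proof.
  intros Hb Ht HN Hc Hs Hu.
  set (J := jump_times gamma) in *.
  unfold num_jumps in HN; fold J in HN.
  assert (HsL : sqrt t <= s).
  { assert (phi beta J s <= 4*beta*s) by (unfold phi; pose proof (pos_INR (cnt J s)); lra).
    nra. }
  assert (Hst : s <= t/2).
  { destruct (Rle_or_lt s (t/2)) as [h|h]; auto. exfalso.
    apply Hu in h. unfold phi in h.
    pose proof (le_INR _ _ (cnt_le_len J (t/2))). lra. }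
  split.
  - intros u [h1 h2]. lra.
  - split; [lra|]. split; [lra|].
    intros u [h1 h2].
    unfold num_jumps_in; fold J.
    pose proof (cnt_split J u s ltac:(lra)) as E.
    assert (E' : INR (length (filter (in_Ico u s) J)) = INR (cnt J s) - INR (cnt J u)).
    { rewrite <- E, plus_INR. ring. }
    rewrite E', Rabs_right by lra.
    pose proof (Hu u h2). unfold phi in *. lra.
Qed.

Lemma spacing b J c c' a a' L : 0 <= L ->
  c + 4*b*L <= c' ->
  c' <= phi b J a' ->
  (forall u, u < a -> phi b J u < c) ->
  a + L <= a'.
Proof.
  intros HL Hc H1 H2. destruct (Rle_or_lt (a+L) a') as [h|h]; auto. exfalso.
  pose proof (H2 (a'-L) ltac:(lra)).
  pose proof (phi_lip b J (a'-L) a' ltac:(lra)). lra.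
Qed.

Lemma floor_aux N x : 0 <= x < INR N -> exists n, INR n <= x < INR n + 1.
Proof.
  revert x; induction N as [|N IH]; intros x Hx; [simpl in Hx; lra|].
  rewrite S_INR in Hx.
  destruct (Rlt_or_le x (INR N)) as [h|h].
  - apply IH; lra.
  - exists N; lra.
Qed.

Lemma floor_ex x : 0 <= x -> exists n, INR n <= x < INR n + 1.
Proof.
  intro Hx. destruct (archimed x) as [H1 _].
  assert (0 < IZR (up x)) by lra.
  apply lt_0_IZR in H.
  apply (floor_aux (Z.to_nat (up x))).
  rewrite INR_IZR_INZ, Z2Nat.id by lia. lra.
Qed.

Lemma nth_map_seq (f : nat -> R) n i : (i < n)%nat ->
  nth i (map f (seq 0 n)) 0 = f i.
Proof.
  intro H. rewrite (nth_indep _ _ (f 0%nat)) by (rewrite length_map, length_seq; lia).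
  rewrite map_nth, seq_nth by lia. reflexivity.
Qed.

Theorem lemma8 (beta t : R) (gamma : list stpoint) :
  0 < beta -> 0 < t ->
  is_path t gamma ->
  INR (num_jumps gamma) <= beta * t ->
  exists ss : list R,
    sqrt t / 4 - 1 <= INR (length ss) /\
    (forall s, In s ss ->
       (forall u, interval_of t s u -> 0 <= u <= t / 2) /\
       favorable beta t gamma s) /\
    (forall i j, (i < length ss)%nat -> (j < length ss)%nat -> i <> j ->
       forall u, ~ (interval_of t (nth i ss 0) u /\ interval_of t (nth j ss 0) u)).
Proof.
  intros Hb Ht _ HN.
  set (L := sqrt t).
  assert (HL : 0 < L) by (apply sqrt_lt_R0; lra).
  assert (HLL : L * L = t) by (apply sqrt_sqrt; lra).
  destruct (floor_ex (L/4)) as [n [Hn1 Hn2]]; [lra|].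
  set (J := jump_times gamma).
  set (f := fun k : nat => pt beta J (4*beta*L*INR (S k)) Hb).
  exists (map f (seq 0 n)).
  rewrite length_map, length_seq.
  split; [lra|]. split.
  - intros s Hs. apply in_map_iff in Hs as [k [<- Hk]].
    apply in_seq in Hk.
    destruct (pt_spec beta J (4*beta*L*INR (S k)) Hb) as [A B].
    apply (good_point beta t gamma _ (4*beta*L*INR (S k))); auto.
    assert (1 <= INR (S k) <= INR n).
    { split; [apply (le_INR 1); lia | apply le_INR; lia]. }
    fold L. split.
    + assert (0 <= 4*beta*L) by nra.
      pose proof (Rmult_le_compat_l (4*beta*L) 1 (INR (S k)) H0 (proj1 H)). lra.
    + assert (0 <= 4*beta*L) by nra.
      pose proof (Rmult_le_compat_l (4*beta*L) (INR (S k)) (L/4) H0 ltac:(lra)).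
      rewrite <- HLL. nra.
  - intros i j Hi Hj Hij u [Hu1 Hu2].
    rewrite !nth_map_seq in * by lia.
    unfold interval_of in *. fold L in Hu1, Hu2.
    assert (key : forall i j, (i < j)%nat -> f i + L <= f j).
    { intros i' j' hij.
      destruct (pt_spec beta J (4*beta*L*INR (S i')) Hb) as [A B].
      destruct (pt_spec beta J (4*beta*L*INR (S j')) Hb) as [C D].
      apply (spacing beta J (4*beta*L*INR (S i')) (4*beta*L*INR (S j'))); auto; [lra|].
      assert (INR (S i') + 1 <= INR (S j')).
      { rewrite <- S_INR. apply le_INR. lia. }
      assert (0 <= 4*beta*L) by nra.
      pose proof (Rmult_le_compat_l (4*beta*L) _ _ H0 H). lra. }
    destruct (Nat.lt_total i j) as [h|[h|h]]; [| lia |];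
      pose proof (key _ _ h); lra.
Qed.
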